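(* Let $r \in \mathbb{Q}_{>0}$ be such that $S_r$ is atomic. The following are equivalent: (1) $r \in \mathbb{N}$; (2) $\rho(S_r) = 1$; (3) $\rho(S_r) < \infty$. Consequently, $\rho(S_r) \in \{1, \infty\}$.
   Context: For $q \in \mathbb{Q}_{>0}$, $\mathsf{n}(q),\mathsf{d}(q)$ are the positive coprime integers with $q = \mathsf{n}(q)/\mathsf{d}(q)$. $S_r$ is the additive submonoid of $(\mathbb{Q}_{\ge 0},+)$ generated by $\{r^n : n \in \mathbb{N}_0\}$; it is atomic exactly when $r=1$ or $\mathsf{n}(r)>1$. $\mathsf{L}(x)$ denotes the set of lengths of factorizations of $x$ into atoms. The elasticity of $x \ne 0$ is $\rho(x) = \sup \mathsf{L}(x)/\inf \mathsf{L}(x) \in \mathbb{Q}_{\ge 1} \cup \{\infty\}$, $\rho(0)=1$, and $\rho(S_r) = \sup\{\rho(x) : x \in S_r \setminus \{0\}\}$. *)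

(* Defs.v *)
From HB Require Import structures.
From mathcomp Require Import all_boot all_order all_algebra.
From Stdlib Require Import Classical ClassicalEpsilon.
Set Implicit Arguments. Unset Strict Implicit. Unset Printing Implicit Defensive.
Import Order.TTheory GRing.Theory Num.Theory.
Local Open Scope ring_scope.

(* S_r : the additive submonoid of Q_{>=0} generated by {r^n : n in N_0}:
   x \in S_r iff x is a finite sum of powers of r (empty sum = 0). *)
Definition in_Sr (r x : rat) : Prop :=
  exists s : seq nat, x = \sum_(n <- s) r ^+ n.

(* atoms of S_r: nonzero non-units (S_r is reduced) not a sum of two nonzero elements *)
Definition atom (r a : rat) : Prop :=
  [/\ in_Sr r a, a != 0 &
      forall b c, in_Sr r b -> in_Sr r c -> a = b + c -> b = 0 \/ c = 0].

(* a factorization of x is a finite multiset (here: a list, up to order) of atoms summing to x *)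
Definition factorization (r x : rat) (s : seq rat) : Prop :=
  (forall a, a \in s -> atom r a) /\ \sum_(a <- s) a = x.

Definition atomic (r : rat) : Prop :=
  forall x, in_Sr r x -> x != 0 -> exists s, factorization r x s.

Definition lengths (r x : rat) (n : nat) : Prop :=
  exists s, factorization r x s /\ size s = n.

Definition ext_max (P : nat -> Prop) : option nat :=
  match excluded_middle_informative
          (exists m, P m /\ forall n, P n -> (n <= m)%N) with
  | left H => Some (proj1_sig (constructive_indefinite_description _ H))
  | right _ => None
  end.

Definition ext_min (P : nat -> Prop) : option nat :=
  match excluded_middle_informative
          (exists m, P m /\ forall n, P n -> (m <= n)%N) with
  | left H => Some (proj1_sig (constructive_indefinite_description _ H))
  | right _ => None
  end.

(* elasticity rho(x) in Q_{>=1} \cup {oo}; [None] encodes oo.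
   rho(0) = 1; for x <> 0, rho(x) = sup L(x) / inf L(x) (= oo if L(x) is unbounded). *)
Definition rho (r x : rat) : option rat :=
  if x == 0 then Some 1 else
  match ext_max (lengths r x), ext_min (lengths r x) with
  | Some M, Some m => Some (M%:R / m%:R)
  | _, _ => None
  end.

Definition ext_le (v : option rat) (q : rat) : Prop :=
  match v with Some p => p <= q | None => False end.

Definition rho_Sr_ub (r q : rat) : Prop :=
  forall x, in_Sr r x -> x != 0 -> ext_le (rho r x) q.

(* rho(S_r) = v, where v in Q \cup {oo} ([None] = oo):
   Some q : q is the least upper bound of the elasticities;
   None   : the elasticities have no (rational, equivalently real) upper bound. *)
Definition rho_Sr_is (r : rat) (v : option rat) : Prop :=
  match v with
  | Some q => rho_Sr_ub r q /\ (forall q', rho_Sr_ub r q' -> q <= q')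
  | None => forall q, ~ rho_Sr_ub r q
  end.

(* Main.v *)
Require Import Defs.
From HB Require Import structures.
From mathcomp Require Import all_boot all_order all_algebra.
From Stdlib Require Import Classical ClassicalEpsilon.
From mathcomp Require Import ring lra.
Import Order.TTheory GRing.Theory Num.Theory.
Local Open Scope ring_scope.

Lemma ext_maxP (P : nat -> Prop) M : ext_max P = Some M ->
  P M /\ forall n, P n -> (n <= M)%N.
Proof.
rewrite /ext_max; case: excluded_middle_informative => // H [<-].
exact: proj2_sig (constructive_indefinite_description _ H).
Qed.

Lemma ext_minP (P : nat -> Prop) M : ext_min P = Some M ->
  P M /\ forall n, P n -> (M <= n)%N.
Proof.
rewrite /ext_min; case: excluded_middle_informative => // H [<-].
exact: proj2_sig (constructive_indefinite_description _ H).
Qed.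

Lemma ext_maxE (P : nat -> Prop) m : P m -> (forall n, P n -> (n <= m)%N) ->
  ext_max P = Some m.
Proof.
move=> Pm Hm; rewrite /ext_max; case: excluded_middle_informative => H; last first.
  by exfalso; apply: H; exists m.
congr Some; case: (constructive_indefinite_description _ H) => M /= [PM HM].
by apply/eqP; rewrite eqn_leq Hm // HM.
Qed.

Lemma ext_minE (P : nat -> Prop) m : P m -> (forall n, P n -> (m <= n)%N) ->
  ext_min P = Some m.
Proof.
move=> Pm Hm; rewrite /ext_min; case: excluded_middle_informative => H; last first.
  by exfalso; apply: H; exists m.
congr Some; case: (constructive_indefinite_description _ H) => M /= [PM HM].
by apply/eqP; rewrite eqn_leq Hm // HM.
Qed.

Lemma sum_nseq (T : Type) (F : T -> rat) n x :
  \sum_(j <- nseq n x) F j = F x *+ n.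
Proof. by elim: n => [|n IH]; rewrite ?big_nil ?mulr0n //= big_cons IH mulrS. Qed.

Lemma in_Sr_nat r k : in_Sr r k%:R.
Proof. by exists (nseq k 0%N); rewrite sum_nseq expr0. Qed.

Lemma in_Sr_ge0 r x : 0 <= r -> in_Sr r x -> 0 <= x.
Proof. by move=> r0 [s ->]; apply: sumr_ge0 => i _; apply: exprn_ge0. Qed.

Lemma term_le_sum (s : seq nat) (F : nat -> rat) k :
  (forall i, 0 <= F i) -> k \in s -> F k <= \sum_(j <- s) F j.
Proof.
move=> F0 ks; rewrite (big_rem k) //= lerDl.
by apply: sumr_ge0 => i _.
Qed.

Lemma rat_nat (r : rat) : 0 < r -> exists a b : nat,
  [/\ r = a%:R / b%:R, coprime a b, (0 < a)%N & (0 < b)%N].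
Proof.
move=> r0; exists `|numq r|%N, `|denq r|%N; split.
- rewrite -{1}[r]divq_num_den; congr (_ / _).
  + have h : 0 <= numq r by rewrite ltW // numq_gt0.
    by rewrite -[numq r](gez0_abs h).
  + have h : 0 <= denq r by rewrite ltW // denq_gt0.
    by rewrite -[denq r](gez0_abs h).
- exact: coprime_num_den.
- by rewrite absz_gt0; apply/eqP => h; move: r0; rewrite -numq_gt0 h.
- by rewrite absz_gt0 denq_neq0.
Qed.

Lemma core (p q : nat) (t : seq nat) : (0 < p)%N -> (1 < q)%N -> coprime p q ->
  (forall j, j \in t -> (0 < j)%N) ->
  1 != \sum_(j <- t) (q%:R / p%:R : rat) ^+ j.
Proof.
move=> p0 q1 cpq tpos; apply/eqP => H.
set M := (\sum_(j <- t) j)%N.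
have jM : forall j, j \in t -> (j <= M)%N.
  move=> j jt; rewrite /M (big_rem j) //=; exact: leq_addr.
have pn0 : (p%:R : rat) != 0 by rewrite pnatr_eq0 -lt0n.
have E : ((p ^ M)%N%:R : rat) = (\sum_(j <- t) (q ^ j * p ^ (M - j))%N)%:R.
  rewrite natr_sum.
  transitivity (\sum_(j <- t) (q%:R / p%:R : rat) ^+ j * (p ^ M)%:R).
    by rewrite -mulr_suml -H mul1r.
  rewrite big_seq [RHS]big_seq; apply: eq_bigr => j jt.
  rewrite natrM !natrX expr_div_n -(subnKC (jM j jt)) exprD mulrA divfK ?expf_neq0 //.
  by rewrite addKn.
move/eqP: E; rewrite eqr_nat => /eqP E.
have : (q %| p ^ M)%N.
  rewrite E big_seq; apply: dvdn_sum => j jt.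
  by apply: dvdn_mulr; apply: dvdn_exp; [exact: tpos | exact: dvdnn].
move=> /gcdn_idPl; move: cpq; rewrite coprime_sym => /(coprimeXr M).
rewrite /coprime => /eqP -> q1'.
by move: q1; rewrite -q1'.
Qed.

Lemma atom_pow (a b : nat) n : coprime a b -> (1 < a)%N -> (1 < b)%N ->
  atom (a%:R / b%:R) ((a%:R / b%:R) ^+ n).
Proof.
set r : rat := a%:R / b%:R => cab a1 b1.
have a0 : (a%:R : rat) != 0 by rewrite pnatr_eq0 -lt0n ltnW.
have b0 : (b%:R : rat) != 0 by rewrite pnatr_eq0 -lt0n ltnW.
have r0 : 0 < r by rewrite divr_gt0 // ltr0n ltnW.
split.
- by exists [:: n]; rewrite big_seq1.
- by rewrite expf_neq0 // gt_eqF.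
move=> y z [s1 ->] [s2 ->] E.
case: (boolP (\sum_(j <- s1) r ^+ j == 0)) => [/eqP|y0]; first by left.
case: (boolP (\sum_(j <- s2) r ^+ j == 0)) => [/eqP|z0]; first by right.
exfalso.
have F0 : forall i, 0 <= r ^+ i by move=> i; exact/exprn_ge0/ltW.
have yp : 0 < \sum_(j <- s1) r ^+ j by rewrite lt_def y0 sumr_ge0.
have zp : 0 < \sum_(j <- s2) r ^+ j by rewrite lt_def z0 sumr_ge0.
have lt : forall k, k \in s1 ++ s2 -> r ^+ k < r ^+ n.
  move=> k; rewrite mem_cat => /orP [ks|ks].
    apply: (le_lt_trans (@term_le_sum _ (fun j => r ^+ j) k F0 ks)); rewrite E ltrDl //.
  apply: (le_lt_trans (@term_le_sum _ (fun j => r ^+ j) k F0 ks)); rewrite E ltrDr //.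
move: E; rewrite -big_cat; set s := s1 ++ s2 => E.
have nab : a != b.
  apply/eqP => ab; move: cab; rewrite ab /coprime gcdnn => /eqP b1'.
  by move: b1; rewrite b1'.
case: (ltngtP a b) => [ab|ba|]; last by move/eqP; rewrite (negPf nab).
-
  have r1 : r < 1 by rewrite ltr_pdivrMr ?ltr0n ?(ltnW b1) // mul1r ltr_nat.
  have kn : forall k, k \in s -> (n < k)%N.
    by move=> k /lt; rewrite ltr_iXn2l.
  have : 1 != \sum_(j <- map (subn^~ n) s) (a%:R / b%:R : rat) ^+ j.
    apply: core => //; first exact: ltnW.
      by rewrite coprime_sym.
    by move=> j /mapP [k /kn kn' ->]; rewrite subn_gt0.
  rewrite big_map; apply/negP; rewrite negbK; apply/eqP.
  apply: (mulfI (@expf_neq0 _ r n (negbT (gt_eqF r0)))).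
  rewrite mulr1 mulr_sumr {1}E big_seq [RHS]big_seq; apply: eq_bigr => k ks.
  by rewrite -/r -exprD subnKC // ltnW // kn.
-
  have r1 : 1 < r by rewrite ltr_pdivlMr ?ltr0n ?(ltnW b1) // mul1r ltr_nat.
  have kn : forall k, k \in s -> (k < n)%N.
    by move=> k /lt; rewrite ltr_eXn2l.
  have : 1 != \sum_(j <- map (subn n) s) (b%:R / a%:R : rat) ^+ j.
    apply: core => //; first exact: ltnW.
    by move=> j /mapP [k /kn kn' ->]; rewrite subn_gt0.
  rewrite big_map; apply/negP; rewrite negbK; apply/eqP.
  apply: (mulfI (@expf_neq0 _ r n (negbT (gt_eqF r0)))).
  rewrite mulr1 mulr_sumr {1}E big_seq [RHS]big_seq; apply: eq_bigr => k ks.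
  rewrite -invf_div -/r exprVn.
  have -> : r ^+ n = r ^+ k * r ^+ (n - k) by rewrite -exprD subnKC // ltnW // kn.
  by rewrite mulfK // expf_neq0 // gt_eqF.
Qed.

Lemma in_Sr_natr (n : nat) x : in_Sr n%:R x -> exists k : nat, x = k%:R.
Proof.
case=> s ->; exists (\sum_(j <- s) n ^ j)%N; rewrite natr_sum.
by apply: eq_bigr => j _; rewrite natrX.
Qed.

Lemma atom_natr n a : atom n%:R a -> a = 1.
Proof.
case=> /in_Sr_natr [k ->] k0 H.
case: k k0 H => [|[|k]] k0 H; first by rewrite eqxx in k0.
  by [].
have e : (k.+2%:R : rat) = 1 + k.+1%:R by rewrite -add1n natrD.
have := H 1 k.+1%:R (in_Sr_nat _ 1) (in_Sr_nat _ _) e.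
by case => /eqP; rewrite ?oner_eq0 ?pnatr_eq0.
Qed.

Lemma atom_one_nat n : atom n%:R 1.
Proof.
split; first by exists [:: 0%N]; rewrite big_seq1 expr0.
  exact: oner_neq0.
move=> y z /in_Sr_natr [i ->] /in_Sr_natr [j ->] /eqP.
rewrite -natrD -[1]/(1%:R) eqr_nat.
by case: i => [|[|i]]; case: j => [|[|j]] //=; by [left | right].
Qed.

Lemma fact_natr n x s : factorization n%:R x s -> x = (size s)%:R.
Proof.
case=> Hs <-; elim: s Hs => [|e s IH] Hs; first by rewrite big_nil.
rewrite big_cons IH; last by move=> a ain; apply: Hs; rewrite inE ain orbT.
by rewrite (@atom_natr n e (Hs e _)) ?inE ?eqxx //= mulrS.
Qed.

Lemma rho_natr n x : in_Sr n%:R x -> x != 0 -> rho n%:R x = Some 1.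
Proof.
move=> /in_Sr_natr [k ->] x0.
have Lk : forall L, lengths n%:R k%:R L -> L = k.
  by move=> L [s [/fact_natr /eqP]]; rewrite eqr_nat => /eqP -> ->.
have Lk' : lengths n%:R k%:R k.
  exists (nseq k 1); split; last by rewrite size_nseq.
  split; last by rewrite sum_nseq.
  by move=> a; rewrite mem_nseq => /andP [_ /eqP ->]; apply: atom_one_nat.
rewrite /rho (negPf x0) (@ext_maxE _ k) //; last by move=> L /Lk ->.
rewrite (@ext_minE _ k) //; last by move=> L /Lk ->.
by rewrite divff.
Qed.

Lemma lemA (r : rat) : (exists n : nat, r = n%:R) -> rho_Sr_is r (Some 1).
Proof.
case=> n ->; split.
  by move=> x xS x0; rewrite (@rho_natr n x xS x0) /=.
move=> q' /(_ 1 (in_Sr_nat _ 1) (oner_neq0 _)).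
by rewrite (@rho_natr n 1 (in_Sr_nat _ 1) (oner_neq0 _)).
Qed.

Lemma bernoulli (w : rat) N : 0 <= w -> 1 + N%:R * w <= (1 + w) ^+ N.
Proof.
move=> w0; elim: N => [|N IH]; first by rewrite mul0r addr0 expr0.
have N0 : 0 <= (N%:R : rat) by rewrite ler0n.
rewrite exprSr mulrSr; nra.
Qed.

Lemma ratio_le (A B M m : rat) : 0 <= A -> 0 < m -> A <= M -> m <= B ->
  A / B <= M / m.
Proof.
move=> A0 m0 AM mB.
have B0 : 0 < B by apply: lt_le_trans mB.
apply: ler_pM => //; first by rewrite invr_ge0 ltW.
by rewrite lef_pV2 ?posrE.
Qed.

Lemma growth (u v : nat) (q : rat) : (0 < v)%N -> (v < u)%N ->
  exists N, q < (u ^ N)%:R / (v ^ N)%:R.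
Proof.
move=> v0 vu.
have v0' : 0 < (v%:R : rat) by rewrite ltr0n.
set w : rat := u%:R / v%:R - 1.
have w0 : 0 < w.
  by rewrite /w subr_gt0 ltr_pdivlMr // mul1r ltr_nat.
have hx : 0 <= `|q| / w by rewrite divr_ge0 // ltW.
exists (Num.Def.archi_bound (`|q| / w)).
set N := Num.Def.archi_bound _.
have := archi_boundP hx; rewrite -/N => HN.
have := @bernoulli w N (ltW w0).
have e : 1 + w = u%:R / v%:R by rewrite /w addrC subrK.
rewrite e expr_div_n -!natrX => HB.
apply: lt_le_trans HB.
apply: (le_lt_trans (ler_norm q)).
have : `|q| < N%:R * w by rewrite -ltr_pdivrMr.
move=> h; apply: (lt_le_trans h); rewrite lerDr //.
Qed.

Lemma no_atom (b : nat) e : (1 < b)%N -> ~ atom (1%:R / b%:R) e.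
Proof.
set r : rat := 1%:R / b%:R => b1.
have b0 : (b%:R : rat) != 0 by rewrite pnatr_eq0 -lt0n ltnW.
have r0 : 0 < r by rewrite divr_gt0 // ltr0n ltnW.
case=> [[[|k s0] ->] e0 H]; first by rewrite big_nil eqxx in e0.
rewrite big_cons in H.
have S1 : in_Sr r (r ^+ k.+1) by exists [:: k.+1]; rewrite big_seq1.
have S2 : in_Sr r (r ^+ k.+1 *+ b.-1 + \sum_(j <- s0) r ^+ j).
  by exists (nseq b.-1 k.+1 ++ s0); rewrite big_cat sum_nseq.
have E : r ^+ k + \sum_(j <- s0) r ^+ j =
         r ^+ k.+1 + (r ^+ k.+1 *+ b.-1 + \sum_(j <- s0) r ^+ j).
  rewrite addrA; congr (_ + _); rewrite -mulrS prednK ?(ltnW b1) //.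
  by rewrite exprSr -mulr_natr -mulrA /r mul1r mulVf // mulr1.
case: (H _ _ S1 S2 E) => /eqP; apply/negP.
  by rewrite expf_neq0 // gt_eqF.
rewrite gt_eqF // ltr_pwDl //.
  by rewrite pmulrn_lgt0 ?exprn_gt0 // -ltnS prednK // ltnW.
by apply: sumr_ge0 => i _; rewrite exprn_ge0 // ltW.
Qed.

Lemma lemB (r : rat) : 0 < r -> atomic r -> ~ (exists n : nat, r = n%:R) ->
  rho_Sr_is r None.
Proof.
move=> r0 hat nN q ub.
have [a [b [rE cab a0 b0]]] := @rat_nat r r0.
have b1 : (1 < b)%N.
  case: b b0 rE cab => [|[|b]] // _ rE _; exfalso; apply: nN; exists a.
  by rewrite rE divr1.
have a1 : (1 < a)%N.
  case: a a0 rE cab => [|[|a]] // _ rE _; exfalso.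
  have [s [Hs Hsum]] := hat 1 (in_Sr_nat r 1) (oner_neq0 _).
  case: s Hs Hsum => [|e s] Hs Hsum; first by move: Hsum; rewrite big_nil => /eqP; rewrite eq_sym oner_eq0.
  apply: (@no_atom b e b1); rewrite -rE; apply: Hs; exact: mem_head.
subst r.
have bR : (b%:R : rat) != 0 by rewrite pnatr_eq0 -lt0n ltnW.
set r : rat := a%:R / b%:R.
have L : forall N, lengths r (a ^ N)%:R (a ^ N) /\ lengths r (a ^ N)%:R (b ^ N).
  move=> N; split.
    exists (nseq (a ^ N) 1); split; last by rewrite size_nseq.
    split; last by rewrite sum_nseq.
    move=> x; rewrite mem_nseq => /andP [_ /eqP ->].
    by rewrite -(expr0 r); apply: atom_pow.
  exists (nseq (b ^ N) (r ^+ N)); split; last by rewrite size_nseq.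
  split; last by rewrite sum_nseq /r expr_div_n -[_ *+ (b ^ N)]mulr_natr !natrX divfK // expf_neq0.
  by move=> x; rewrite mem_nseq => /andP [_ /eqP ->]; apply: atom_pow.
have x0 : forall N, ((a ^ N)%:R : rat) != 0 by move=> N; rewrite pnatr_eq0 -lt0n expn_gt0 a0.
have key : forall N M m, ext_max (lengths r (a ^ N)%:R) = Some M ->
    ext_min (lengths r (a ^ N)%:R) = Some m ->
    [/\ (a ^ N <= M)%N, (b ^ N <= M)%N, (m <= a ^ N)%N, (m <= b ^ N)%N & (0 < m)%N].
  move=> N M m /ext_maxP [_ HM] /ext_minP [[s [[_ Hs] Hsz]] Hm].
  have [La Lb] := L N.
  split; [exact: HM | exact: HM | exact: Hm | exact: Hm |].
  rewrite -Hsz lt0n size_eq0; apply/eqP => s0; move: Hs; rewrite s0 big_nil.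
  by move/eqP; rewrite eq_sym (negPf (x0 N)).
have ubN : forall N, exists M m, ext_max (lengths r (a ^ N)%:R) = Some M /\
    ext_min (lengths r (a ^ N)%:R) = Some m /\ (M%:R / m%:R : rat) <= q.
  move=> N.
  have xS : in_Sr r (a ^ N)%:R by exact: in_Sr_nat.
  move: (ub _ xS (x0 N)); rewrite /rho (negPf (x0 N)).
  case: (ext_max _) => [M|] //; case: (ext_min _) => [m|] // h.
  by exists M, m.
have ab : a != b.
  apply/eqP => ab; move: cab; rewrite ab /coprime gcdnn => /eqP b1'.
  by move: b1; rewrite b1'.
case: (ltngtP a b) => [lab|lba|]; last by move/eqP; rewrite (negPf ab).
- have [N HN] := @growth b a q (ltnW a1) lab.
  have [M [m [HM [Hm Hq]]]] := ubN N.
  have [_ bM ma _ m0] := key N M m HM Hm.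
  have : (b ^ N)%:R / (a ^ N)%:R <= (M%:R / m%:R : rat).
    by apply: ratio_le; rewrite ?ler0n ?ltr0n ?ler_nat.
  by move=> h; have := lt_le_trans HN (le_trans h Hq); rewrite ltxx.
- have [N HN] := @growth a b q (ltnW b1) lba.
  have [M [m [HM [Hm Hq]]]] := ubN N.
  have [aM _ _ mb m0] := key N M m HM Hm.
  have : (a ^ N)%:R / (b ^ N)%:R <= (M%:R / m%:R : rat).
    by apply: ratio_le; rewrite ?ler0n ?ltr0n ?ler_nat.
  by move=> h; have := lt_le_trans HN (le_trans h Hq); rewrite ltxx.
Qed.

Theorem corollary4p2 (r : rat) (hr : 0 < r) (hat : atomic r) :
  [/\ (exists n : nat, r = n%:R) <-> rho_Sr_is r (Some 1),
      rho_Sr_is r (Some 1) <-> ~ rho_Sr_is r None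
    & rho_Sr_is r (Some 1) \/ rho_Sr_is r None].
Proof.
have C : rho_Sr_is r (Some 1) -> ~ rho_Sr_is r None.
  by move=> [ub _] H; exact: H 1 ub.
have B := @lemB r hr hat.
split.
- split; first exact: lemA.
  move=> H; apply: NNPP => nN; exact: C H (B nN).
- split; first exact: C.
  move=> nNone; case: (classic (exists n : nat, r = n%:R)) => h.
    exact: lemA.
  by exfalso; apply: nNone; apply: B.
- case: (classic (exists n : nat, r = n%:R)) => h.
    by left; apply: lemA.
  by right; apply: B.
Qed.
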